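(* Let $G$ be a finitely generated group of exponential growth with finite generating set $S_G$ and let $H\ne\{1\}$ be a finite group; equip $H\wr G$ with the word metric with respect to $(H\setminus\{1\})\cup S_G$. If $\mathrm{dim}_{AN}(G)\le n$, then for any $k\ge n$ the $k$-dimensional control function of $H\wr G$ is weakly equivalent to $t\mapsto 2^t$; that is, there is a $k$-dimensional control function of $H\wr G$ weakly dominated by $2^t$, and every $k$-dimensional control function of $H\wr G$ weakly dominates $2^t$.
   Context: Wreath product: $H\wr G$ is the set of pairs $(f,g)$, $f:G\to H$ finitely supported, with $(f_1,g_1)(f_2,g_2)=(f_1\cdot(g_1f_2),g_1g_2)$ where $(gf)(\gamma)=f(g^{-1}\gamma)$. Growth function $\gamma(r)=\#\{g:|g|_{S_G}<r\}$; exponential growth means $\gamma$ is weakly equivalent to $2^t$ (equivalently $\lim_r\gamma(r)^{1/r}>1$). For a metric space $X$, $r>0$: $r$-components of $Y\subseteq X$ are classes of points joined by sequences in $Y$ with consecutive distances $<r$. An $m$-dimensional control function of $X$ is $D:\mathbb{R}_+\to\mathbb{R}_+\cup\{\infty\}$ such that for each $r>0$ there is a cover $\{X_0,\dots,X_m\}$ of $X$ such that every open ball $B(x,r)$ lies in some $X_i$ and every $r$-component of each $X_i$ has diameter at most $D(r)$. $\mathrm{dim}_{AN}(X)$ is the smallest $m$ such that $X$ has an $m$-dimensional control function $D(r)=Cr$ with $C>0$. $f$ weakly dominates $g$ if there are $\lambda\ge1$, $C\ge0$ with $g(t)\le\lambda f(\lambda t+C)+C$ for all $t\ge0$; weakly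 equivalent means each weakly dominates the other. *)

(* Defs.v *)
From Stdlib Require Import Reals List Relations ClassicalEpsilon.
From Coquelicot Require Import Rbar.
Open Scope R_scope.

Record group := Group {
  gcar :> Type;
  gmul : gcar -> gcar -> gcar;
  gone : gcar;
  ginv : gcar -> gcar;
  gmulA : forall x y z, gmul x (gmul y z) = gmul (gmul x y) z;
  gmul1l : forall x, gmul gone x = x;
  gmul1r : forall x, gmul x gone = x;
  gmulVl : forall x, gmul (ginv x) x = gone;
  gmulVr : forall x, gmul x (ginv x) = gone
}.
Arguments gmul {g}. Arguments gone {g}. Arguments ginv {g}.

Definition finite_group (H : group) : Prop :=
  exists l : list H, forall h : H, In h l.

Definition word_le {X : Type} (mul : X -> X -> X) (one : X) (gen : X -> Prop)
  (x : X) (n : nat) : Prop :=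
  exists l : list X, (length l <= n)%nat /\ Forall gen l /\ fold_right mul one l = x.

(* the word length: the least such n (chosen classically; it exists whenever
   x lies in the generated subgroup) *)
Definition word_len {X : Type} (mul : X -> X -> X) (one : X) (gen : X -> Prop)
  (x : X) : nat :=
  epsilon (inhabits 0%nat)
    (fun n => word_le mul one gen x n /\ forall m, word_le mul one gen x m -> (n <= m)%nat).

Definition word_dist {X : Type} (mul : X -> X -> X) (one : X) (inv : X -> X)
  (gen : X -> Prop) (x y : X) : R :=
  INR (word_len mul one gen (mul (inv x) y)).

Definition genG (G : group) (S : list G) (x : G) : Prop := In x S \/ In (ginv x) S.

Definition generates (G : group) (S : list G) : Prop :=
  forall x : G, exists n, word_le gmul gone (genG G S) x n.

Definition distG (G : group) (S : list G) : G -> G -> R :=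
  word_dist gmul gone ginv (genG G S).

Definition growth (G : group) (S : list G) (r : R) : nat :=
  epsilon (inhabits 0%nat)
    (fun m => exists l : list G, NoDup l /\ length l = m /\
       forall x : G, In x l <-> INR (word_len gmul gone (genG G S) x) < r).

Definition weakly_dominates (f g : R -> Rbar) : Prop :=
  exists lam C : R, 1 <= lam /\ 0 <= C /\
    forall t, 0 <= t -> Rbar_le (g t) (Rbar_plus (Rbar_mult lam (f (lam * t + C))) C).

Definition weakly_equiv (f g : R -> Rbar) : Prop :=
  weakly_dominates f g /\ weakly_dominates g f.

Definition exp2 : R -> Rbar := fun t => Finite (Rpower 2 t).

Definition exp_growth (G : group) (S : list G) : Prop :=
  weakly_equiv (fun t => Finite (INR (growth G S t))) exp2.

Definition r_conn {X : Type} (dom : X -> Prop) (d : X -> X -> R) (Y : X -> Prop)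
  (r : R) : X -> X -> Prop :=
  clos_refl_trans X (fun a b => dom a /\ Y a /\ dom b /\ Y b /\ d a b < r).

Definition control_function {X : Type} (dom : X -> Prop) (d : X -> X -> R)
  (m : nat) (D : R -> Rbar) : Prop :=
  (forall t, 0 <= t -> Rbar_le (Finite 0) (D t)) /\
  forall r, 0 < r ->
    exists Xs : nat -> X -> Prop,
      (forall x, dom x -> exists i, (i <= m)%nat /\ Xs i x) /\
      (forall x, dom x -> exists i, (i <= m)%nat /\
          forall y, dom y -> d x y < r -> Xs i y) /\
      (forall i, (i <= m)%nat -> forall x y, dom x -> Xs i x ->
          r_conn dom d (Xs i) r x y -> Rbar_le (Finite (d x y)) (D r)).

Definition dimAN_le {X : Type} (dom : X -> Prop) (d : X -> X -> R) (n : nat) : Prop :=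
  exists m, (m <= n)%nat /\ exists C, 0 < C /\
    control_function dom d m (fun r => Finite (C * r)).

(** * Wreath product H wr G: pairs (f,g), f : G -> H finitely supported *)
Definition wr (G H : group) : Type := ((G -> H) * G)%type.

Definition wr_fs (G H : group) (x : wr G H) : Prop :=
  exists l : list G, forall y : G, fst x y <> gone -> In y l.

(* (f1,g1)(f2,g2) = (f1 . (g1 f2), g1 g2),  (g f)(y) = f (g^{-1} y) *)
Definition wr_mul (G H : group) (x y : wr G H) : wr G H :=
  (fun z => gmul (fst x z) (fst y (gmul (ginv (snd x)) z)), gmul (snd x) (snd y)).

Definition wr_one (G H : group) : wr G H := (fun _ => gone, gone).

Definition wr_inv (G H : group) (x : wr G H) : wr G H :=
  (fun z => ginv (fst x (gmul (snd x) z)), ginv (snd x)).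

(* generators (H \ {1}) ∪ S_G, with H embedded at the identity of G,
   together with inverses of S_G *)
Definition wr_gen (G H : group) (S : list G) (x : wr G H) : Prop :=
  (snd x = gone /\ fst x gone <> gone /\ forall z : G, z <> gone -> fst x z = gone)
  \/ ((forall z : G, fst x z = gone) /\ genG G S (snd x)).

Definition wr_dist (G H : group) (S : list G) : wr G H -> wr G H -> R :=
  word_dist (wr_mul G H) (wr_one G H) (wr_inv G H) (wr_gen G H S).

(* Main.v *)
Require Import Defs.
From Stdlib Require Import Reals List Relations ClassicalEpsilon Classical FunctionalExtensionality PropExtensionality Permutation Lia Lra Bool.
From Coquelicot Require Import Rbar.
Open Scope R_scope.

Section GroupLemmas.
Variable Γ : group.

Lemma g_cancel_l (a x y : Γ) : gmul a x = gmul a y -> x = y.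
Proof.
  intro E. rewrite <- (gmul1l Γ x), <- (gmul1l Γ y), <- (gmulVl Γ a), <- !gmulA, E. reflexivity.
Qed.

Lemma g_invK (x : Γ) : ginv (ginv x) = x.
Proof. apply (g_cancel_l (ginv x)). rewrite gmulVr, gmulVl. reflexivity. Qed.

Lemma g_inv_mul (x y : Γ) : ginv (gmul x y) = gmul (ginv y) (ginv x).
Proof.
  apply (g_cancel_l (gmul x y)). rewrite gmulVr.
  rewrite <- gmulA, (gmulA _ y (ginv y)), gmulVr, gmul1l, gmulVr. reflexivity.
Qed.

Lemma g_inv1 : ginv (@gone Γ) = gone.
Proof. rewrite <- (gmul1l Γ (ginv gone)). apply gmulVr. Qed.

Lemma g_mulKl (a x : Γ) : gmul (ginv a) (gmul a x) = x.
Proof. rewrite gmulA, gmulVl, gmul1l. reflexivity. Qed.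
Lemma g_mulKr (a x : Γ) : gmul a (gmul (ginv a) x) = x.
Proof. rewrite gmulA, gmulVr, gmul1l. reflexivity. Qed.

Variable gen : Γ -> Prop.

Lemma fold_app_mul (l1 l2 : list Γ) :
  fold_right gmul gone (l1 ++ l2) = gmul (fold_right gmul gone l1) (fold_right gmul gone l2).
Proof.
  induction l1 as [|a l IH]; simpl. now rewrite gmul1l. rewrite IH, gmulA. reflexivity.
Qed.

Lemma wle_mono x n m : word_le gmul gone gen x n -> (n <= m)%nat -> word_le gmul gone gen x m.
Proof. intros [l [H1 [H2 H3]]] Hm. exists l. repeat split; auto; lia. Qed.

Lemma wle_one : word_le gmul gone gen gone 0.
Proof. exists nil. simpl. repeat split; auto. Qed.

Lemma wle_gen x : gen x -> word_le gmul gone gen x 1.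
Proof. intro Hx. exists (x :: nil). simpl. repeat split; auto. now rewrite gmul1r. Qed.

Lemma wle_mul x y a b : word_le gmul gone gen x a -> word_le gmul gone gen y b ->
  word_le gmul gone gen (gmul x y) (a + b).
Proof.
  intros [l1 [H1 [H2 H3]]] [l2 [K1 [K2 K3]]]. exists (l1 ++ l2).
  rewrite length_app, fold_app_mul, H3, K3. repeat split; try lia.
  apply Forall_app; auto.
Qed.

Hypothesis gen_inv : forall x, gen x -> gen (ginv x).

Lemma wle_inv x n : word_le gmul gone gen x n -> word_le gmul gone gen (ginv x) n.
Proof.
  intros [l [H1 [H2 H3]]]. subst x. revert n H1. induction l as [|a l IH]; intros n H1; simpl.
  - rewrite g_inv1. apply wle_mono with 0%nat; [apply wle_one| lia].
  - simpl in H1. inversion H2; subst. rewrite g_inv_mul.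
    replace n with ((n-1) + 1)%nat by lia. apply wle_mul.
    + apply IH; auto. lia.
    + apply wle_gen; auto.
Qed.

Lemma wlen_spec x n : word_le gmul gone gen x n ->
  word_le gmul gone gen x (word_len gmul gone gen x) /\
  forall m, word_le gmul gone gen x m -> (word_len gmul gone gen x <= m)%nat.
Proof.
  intro Hx. unfold word_len. apply epsilon_spec.
  assert (forall k, forall n, (n <= k)%nat -> word_le gmul gone gen x n ->
     exists n0, word_le gmul gone gen x n0 /\ forall m, word_le gmul gone gen x m -> (n0 <= m)%nat) as Hk.
  { induction k as [|k IH]; intros n0 Hn0 W.
    - exists n0. split; auto. intros. lia.
    - destruct (classic (exists m, (m < n0)%nat /\ word_le gmul gone gen x m)) as [[m [Hm Wm]]|Hno].
      + apply (IH m); auto. lia.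
      + exists n0. split; auto. intros m Wm. destruct (Nat.lt_ge_cases m n0); auto.
        exfalso. apply Hno. eauto. }
  exact (Hk n n (le_n n) Hx).
Qed.

Lemma wlen_le x n : word_le gmul gone gen x n -> (word_len gmul gone gen x <= n)%nat.
Proof. intro H. apply (proj2 (wlen_spec x n H)). exact H. Qed.

Lemma wlen_le' x n : word_le gmul gone gen x n -> word_le gmul gone gen x (word_len gmul gone gen x).
Proof. intro H. apply (proj1 (wlen_spec x n H)). Qed.

Lemma wlen_one : word_len gmul gone gen gone = 0%nat.
Proof. pose proof (wlen_le _ _ wle_one). lia. Qed.

End GroupLemmas.


Section Wreath.
Variables G H : group.

Lemma wr_eq (x y : wr G H) : (forall z, fst x z = fst y z) -> snd x = snd y -> x = y.
Proof. destruct x, y; simpl; intros E1 E2. f_equal; auto. now apply functional_extensionality. Qed.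

Lemma wr_mulA x y z : wr_mul G H x (wr_mul G H y z) = wr_mul G H (wr_mul G H x y) z.
Proof.
  apply wr_eq; simpl; [intro w|]. 2: apply gmulA.
  rewrite gmulA, g_inv_mul, gmulA. reflexivity.
Qed.
Lemma wr_mul1l x : wr_mul G H (wr_one G H) x = x.
Proof. apply wr_eq; simpl; [intro w|]; rewrite ?g_inv1, !gmul1l; reflexivity. Qed.
Lemma wr_mul1r x : wr_mul G H x (wr_one G H) = x.
Proof. apply wr_eq; simpl; [intro w|]; rewrite !gmul1r; reflexivity. Qed.
Lemma wr_mulVl x : wr_mul G H (wr_inv G H x) x = wr_one G H.
Proof. apply wr_eq; simpl; [intro w|]. rewrite g_invK, gmulVl. reflexivity. apply gmulVl. Qed.
Lemma wr_mulVr x : wr_mul G H x (wr_inv G H x) = wr_one G H.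
Proof. apply wr_eq; simpl; [intro w|]. rewrite g_mulKr, gmulVr. reflexivity. apply gmulVr. Qed.

Definition Wg : group := Group (wr G H) (wr_mul G H) (wr_one G H) (wr_inv G H)
  wr_mulA wr_mul1l wr_mul1r wr_mulVl wr_mulVr.

End Wreath.


Section WordW.
Variables (G H : group) (S : list G).

Notation wleG := (word_le (@gmul G) (@gone G) (genG G S)).
Notation lenG := (word_len (@gmul G) (@gone G) (genG G S)).
Notation wleW := (word_le (wr_mul G H) (wr_one G H) (wr_gen G H S)).
Notation lenW := (word_len (wr_mul G H) (wr_one G H) (wr_gen G H S)).

Definition mv (g : G) : wr G H := (fun _ => gone, g).
Definition dec (P : Prop) : bool := if excluded_middle_informative P then true else false.
Lemma decT (P : Prop) : P -> dec P = true.
Proof. unfold dec; destruct excluded_middle_informative; tauto. Qed.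
Lemma decF (P : Prop) : ~ P -> dec P = false.
Proof. unfold dec; destruct excluded_middle_informative; tauto. Qed.
Lemma decP (P : Prop) : dec P = true <-> P.
Proof. unfold dec; destruct excluded_middle_informative; split; intros; auto; discriminate. Qed.

Definition lampAt (q : G) (h : H) : wr G H := (fun z => if dec (z = q) then h else gone, gone).

Lemma genG_inv x : genG G S x -> genG G S (ginv x).
Proof. unfold genG. rewrite g_invK. tauto. Qed.

Lemma g_inv_eq1 (K : group) (a : K) : ginv a = gone -> a = gone.
Proof. intro E. rewrite <- (g_invK K a), E. apply g_inv1. Qed.

Lemma wr_gen_inv x : wr_gen G H S x -> wr_gen G H S (wr_inv G H x).
Proof.
  destruct x as [f g]. unfold wr_gen, wr_inv; simpl.
  intros [[E1 [E2 E3]]|[E1 E2]]; subst.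
  - left. rewrite g_inv1. repeat split.
    + rewrite gmul1l. intro E. apply E2. now apply g_inv_eq1.
    + intros z Hz. rewrite gmul1l, E3; auto. apply g_inv1.
  - right. split. intro z. rewrite E1. apply g_inv1. now apply genG_inv.
Qed.

Lemma wle_mv g n : wleG g n -> wleW (mv g) n.
Proof.
  intros [l [H1 [H2 H3]]]. exists (map mv l). rewrite length_map. repeat split; auto.
  - apply Forall_map. eapply Forall_impl; [|exact H2]. intros a Ha. right. split; auto.
  - subst g. clear H1 H2. induction l as [|a l IH]; simpl. reflexivity.
    rewrite IH. apply wr_eq; simpl; auto. intro; apply gmul1l.
Qed.

Lemma lamp_eq q h : lampAt q h = wr_mul G H (wr_mul G H (mv q) (lampAt gone h)) (mv (ginv q)).
Proof.
  apply wr_eq; simpl. 2: rewrite gmul1r, gmulVr; reflexivity.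
  intro z. rewrite gmul1r, gmul1l. unfold dec.
  destruct (excluded_middle_informative (z = q)), (excluded_middle_informative (gmul (ginv q) z = gone)); auto.
  - subst. rewrite gmulVl in n. tauto.
  - elim n. rewrite <- (g_mulKr G q z), e, gmul1r. reflexivity.
Qed.

Lemma wle_lamp q h n : wleG q n -> wleW (lampAt q h) (2 * n + 1).
Proof.
  intro Hq. destruct (classic (h = gone)) as [->|Hh].
  - replace (lampAt q gone) with (wr_one G H).
    + apply (wle_mono (Wg G H)) with 0%nat; [apply (wle_one (Wg G H))|lia].
    + apply wr_eq; simpl; auto. intro z. destruct dec; auto.
  - rewrite lamp_eq. replace (2 * n + 1)%nat with ((n + 1) + n)%nat by lia.
    apply (wle_mul (Wg G H)); [apply (wle_mul (Wg G H))|].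
    + now apply wle_mv.
    + apply (wle_gen (Wg G H)). left. simpl. repeat split.
      * rewrite decT; auto.
      * intros z Hz. rewrite decF; auto.
    + apply wle_mv. apply (wle_inv G); auto. apply genG_inv.
Qed.

Fixpoint lamp_cost (L : list G) : nat :=
  match L with nil => 0%nat | q :: L' => (2 * lenG q + 1 + lamp_cost L')%nat end.

Hypothesis gens : generates G S.

Lemma wleG_len x : wleG x (lenG x).
Proof. destruct (gens x) as [n Hn]. eapply wlen_le'; eauto. Qed.

Lemma wle_config (L : list G) (phi : G -> H) g :
  (forall z, phi z <> gone -> In z L) -> wleW (phi, g) (lamp_cost L + lenG g).
Proof.
  intro Hs. replace (phi, g) with (wr_mul G H (phi, gone) (mv g)).
  2:{ apply wr_eq; simpl. intro; apply gmul1r. apply gmul1l. }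
  apply (wle_mul (Wg G H)). 2: apply wle_mv, wleG_len.
  revert phi Hs. induction L as [|q L IH]; intros phi Hs; simpl.
  - replace (phi, gone) with (wr_one G H). apply (wle_one (Wg G H)).
    apply wr_eq; simpl; auto. intro z. destruct (classic (phi z = gone)); auto.
    destruct (Hs z H0).
  - set (phi' := fun z => if dec (z = q) then gone else phi z).
    replace (phi, gone) with (wr_mul G H (lampAt q (phi q)) (phi', gone)).
    + apply (wle_mul (Wg G H)). apply wle_lamp, wleG_len. apply IH.
      intros z Hz. unfold phi' in Hz. unfold dec in Hz.
      destruct excluded_middle_informative. tauto. destruct (Hs z Hz); auto. congruence.
    + apply wr_eq; simpl. 2: apply gmul1l. intro z. rewrite g_inv1, gmul1l. unfold phi'.
      unfold dec. destruct excluded_middle_informative. subst. apply gmul1r. apply gmul1l.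
Qed.

Lemma wle_snd x n : wleW x n -> wleG (snd x) n.
Proof.
  intros [l [H1 [H2 H3]]]. subst x. revert n H1. induction l as [|a l IH]; intros n H1; simpl.
  - apply (wle_mono G) with 0%nat. apply wle_one. lia.
  - inversion H2; subst. simpl in H1. destruct H4 as [[E1 _]|[_ E2]].
    + rewrite E1, gmul1l. apply IH; auto. lia.
    + replace n with (1 + (n-1))%nat by lia. apply (wle_mul G). now apply (wle_gen G). apply IH; auto. lia.
Qed.

Lemma wle_supp x n : wleW x n -> forall q, fst x q <> gone -> exists m, (m < n)%nat /\ wleG q m.
Proof.
  intros [l [H1 [H2 H3]]]. subst x. revert n H1. induction l as [|a l IH]; intros n H1 q Hq; simpl in *.
  - tauto.
  - inversion H2; subst. destruct H4 as [[E1 [E2 E3]]|[E1 E2]].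
    + rewrite E1, g_inv1, gmul1l in Hq. destruct (classic (q = gone)) as [->|Hq1].
      * exists 0%nat. split. lia. apply wle_one.
      * rewrite E3, gmul1l in Hq by auto. destruct (IH H5 (n-1)%nat ltac:(lia) q Hq) as [m [Hm Wm]].
        exists m. split; auto. lia.
    + rewrite E1, gmul1l in Hq. destruct (IH H5 (n-1)%nat ltac:(lia) _ Hq) as [m [Hm Wm]].
      exists (1 + m)%nat. split. lia. rewrite <- (g_mulKr G (snd a) q). apply (wle_mul G); auto.
      now apply (wle_gen G).
Qed.

Definition gdec (x y : G) : {x = y} + {x <> y} := excluded_middle_informative (x = y).

Lemma len_remove (L : list G) x : NoDup L -> (length L <= 1 + (length (remove gdec x L)))%nat.
Proof.
  induction 1 as [|a L Ha HL IH]; simpl. lia. destruct (gdec x a); simpl; [|lia].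
  subst. rewrite notin_remove; auto.
Qed.

Lemma NoDup_remove' (L : list G) x : NoDup L -> NoDup (remove gdec x L).
Proof.
  induction 1 as [|a L Ha HL IH]; simpl. constructor.
  destruct (gdec x a); auto. constructor; auto. intro Hin. apply in_remove in Hin. tauto.
Qed.

Lemma wle_count x n : wleW x n -> forall L, NoDup L -> (forall q, In q L -> fst x q <> gone) -> (length L <= n)%nat.
Proof.
  intros [l [H1 [H2 H3]]]. subst x. revert n H1. induction l as [|a l IH]; intros n H1 L HL HS; simpl in *.
  - destruct L as [|q L]. simpl; lia. elim (HS q); simpl; auto.
  - inversion H2; subst. destruct H4 as [[E1 [E2 E3]]|[E1 E2]].
    + pose proof (len_remove L gone HL). enough (length (remove gdec gone L) <= n - 1)%nat by lia.
      apply IH; [auto|lia|apply NoDup_remove'; auto|].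
      intros q Hq. apply in_remove in Hq. destruct Hq as [Hq Hq1]. specialize (HS q Hq).
      rewrite E1, g_inv1, gmul1l, E3, gmul1l in HS; auto.
    + assert (length (map (gmul (ginv (snd a))) L) <= n - 1)%nat as HH.
      { apply IH; [auto|lia| |].
      * apply FinFun.Injective_map_NoDup; auto. intros u v E. apply (g_cancel_l G _ _ _ E).
      * intros q Hq. apply in_map_iff in Hq. destruct Hq as [q' [<- Hq']].
        specialize (HS q' Hq'). rewrite E1, gmul1l in HS. auto. }
      rewrite length_map in HH. lia.
Qed.

End WordW.


Definition sumR {A} (l : list A) (F : A -> R) : R := fold_right (fun a s => F a + s) 0 l.

Lemma sumR_le {A} (l : list A) F G : (forall a, In a l -> F a <= G a) -> sumR l F <= sumR l G.
Proof. induction l; simpl; intros; [lra|]. pose proof (H a (or_introl eq_refl)).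
  assert (sumR l F <= sumR l G) by (apply IHl; auto). lra. Qed.
Lemma sumR_ext {A} (l : list A) F G : (forall a, In a l -> F a = G a) -> sumR l F = sumR l G.
Proof. induction l; simpl; intros; auto. rewrite H, IHl; auto. Qed.
Lemma sumR_const {A} (l : list A) c : sumR l (fun _ => c) = INR (length l) * c.
Proof. induction l as [|a l IH]; [simpl; lra|]. unfold sumR in *. cbn [fold_right length]. rewrite IH, S_INR. lra. Qed.
Lemma sumR_plus {A} (l : list A) F G : sumR l (fun a => F a + G a) = sumR l F + sumR l G.
Proof. induction l; simpl; [lra|]. rewrite IHl. lra. Qed.
Lemma sumR_scal {A} (l : list A) F c : sumR l (fun a => c * F a) = c * sumR l F.
Proof. induction l; simpl; [lra|]. rewrite IHl. lra. Qed.
Lemma sumR_app {A} (l1 l2 : list A) F : sumR (l1 ++ l2) F = sumR l1 F + sumR l2 F.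
Proof. induction l1; simpl; [lra|]. rewrite IHl1. lra. Qed.
Lemma sumR_map {A B} (l : list A) (f : A -> B) F : sumR (map f l) F = sumR l (fun a => F (f a)).
Proof. induction l; simpl; auto. rewrite IHl. auto. Qed.
Lemma sumR_swap {A B} (l1 : list A) (l2 : list B) F :
  sumR l1 (fun a => sumR l2 (F a)) = sumR l2 (fun b => sumR l1 (fun a => F a b)).
Proof.
  induction l1; simpl. induction l2; simpl; lra.
  rewrite IHl1. rewrite <- sumR_plus. reflexivity.
Qed.
Lemma sumR_ind (c : nat) x len s : (s <= c < s + len)%nat ->
  sumR (seq s len) (fun i => if Nat.eqb c i then x else 0) = x.
Proof.
  revert s. induction len; intros s Hs; simpl. lia.
  destruct (Nat.eqb_spec c s).
  - subst. rewrite sumR_ext with (G := fun _ => 0). rewrite sumR_const. lra.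
    intros a Ha. apply in_seq in Ha. destruct (Nat.eqb_spec s a); auto. lia.
  - rewrite IHlen. lra. lia.
Qed.

Fixpoint allv (N : nat) : list (list bool) :=
  match N with 0%nat => nil :: nil | S n => map (cons false) (allv n) ++ map (cons true) (allv n) end.

Fixpoint flip (j : nat) (v : list bool) : list bool :=
  match v with nil => nil | b :: v' => match j with 0%nat => negb b :: v' | S j' => b :: flip j' v' end end.

Lemma allv_len N v : In v (allv N) -> length v = N.
Proof.
  revert v; induction N; simpl; intros v Hv. destruct Hv as [<-|[]]; auto.
  apply in_app_or in Hv. destruct Hv as [Hv|Hv]; apply in_map_iff in Hv; destruct Hv as [w [<- Hw]]; simpl; auto.
Qed.
Lemma allv_length N : length (allv N) = (2 ^ N)%nat.
Proof. induction N; simpl; auto. rewrite length_app, !length_map, IHN. lia. Qed.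

Lemma sumR_flip N j F : (j < N)%nat -> sumR (allv N) F = sumR (allv N) (fun v => F (flip j v)).
Proof.
  revert j F. induction N; intros j F Hj. lia. simpl. rewrite !sumR_app, !sumR_map.
  destruct j as [|j]; simpl.
  - lra.
  - rewrite (IHN j (fun a => F (false :: a))), (IHN j (fun a => F (true :: a))); auto; lia.
Qed.

Lemma flip_len j v : length (flip j v) = length v.
Proof. revert j; induction v; destruct j; simpl; auto. Qed.
Lemma flip_flip j v : flip j (flip j v) = v.
Proof. revert j; induction v; destruct j; simpl; auto. rewrite negb_involutive; auto. rewrite IHv; auto. Qed.
Lemma nth_flip_same j v : (j < length v)%nat -> nth j (flip j v) false = negb (nth j v false).
Proof. revert j; induction v; destruct j; simpl; intros; auto; try lia. apply IHv. lia. Qed.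
Lemma nth_flip_other i j v : i <> j -> nth i (flip j v) false = nth i v false.
Proof. revert i j; induction v; destruct i, j; simpl; intros; auto; try lia. Qed.

Definition ham (N : nat) (u z : list bool) : R :=
  sumR (seq 0 N) (fun j => if Bool.eqb (nth j u false) (nth j z false) then 0 else 1).

Lemma ham_refl N u : ham N u u = 0.
Proof. unfold ham. rewrite sumR_ext with (G := fun _ => 0). rewrite sumR_const; lra.
  intros. rewrite eqb_reflx. auto. Qed.

Lemma ham_compl N u z : INR N - ham N u z =
  sumR (seq 0 N) (fun j => if Bool.eqb (nth j u false) (nth j z false) then 1 else 0).
Proof.
  unfold ham. replace (INR N) with (sumR (seq 0 N) (fun _ => 1)).
  2:{ rewrite sumR_const, length_seq. lra. }
  enough (sumR (seq 0 N) (fun _ => 1) = sumR (seq 0 N) (fun j => if Bool.eqb (nth j u false) (nth j z false) then 1 else 0) + sumR (seq 0 N) (fun j => if Bool.eqb (nth j u false) (nth j z false) then 0 else 1)) by lra.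
  rewrite <- sumR_plus. apply sumR_ext. intros. destruct Bool.eqb; lra.
Qed.

Section Cube.
Variables (N k : nat) (A : nat -> list bool -> Prop) (Dr : R).

Definition Edge (i : nat) (a b : list bool) : Prop :=
  length a = N /\ A i a /\ A i b /\ exists j, (j < N)%nat /\ b = flip j a.

Hypothesis leb : forall v, length v = N -> exists i, (i <= k)%nat /\ A i v /\ forall j, (j < N)%nat -> A i (flip j v).
Hypothesis diam : forall i u z, (i <= k)%nat -> length u = N -> A i u ->
  clos_refl_trans _ (Edge i) u z -> ham N u z <= Dr.

Lemma Edge_sym i a b : Edge i a b -> Edge i b a.
Proof.
  intros [H1 [H2 [H3 [j [Hj ->]]]]]. repeat split; auto. rewrite flip_len; auto.
  exists j. split; auto. now rewrite flip_flip.
Qed.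

Lemma crt_sym i a b : clos_refl_trans _ (Edge i) a b -> clos_refl_trans _ (Edge i) b a.
Proof.
  induction 1. apply rt_step, Edge_sym; auto. apply rt_refl. eapply rt_trans; eauto.
Qed.

Definition cen (i : nat) (u : list bool) : list bool :=
  epsilon (inhabits nil) (fun z => clos_refl_trans _ (Edge i) u z).

Lemma cen_spec i u : clos_refl_trans _ (Edge i) u (cen i u).
Proof. unfold cen. apply epsilon_spec. exists u. apply rt_refl. Qed.

Lemma cen_inv i u u' : clos_refl_trans _ (Edge i) u u' -> cen i u = cen i u'.
Proof.
  intro Hc. unfold cen. f_equal. apply functional_extensionality. intro z.
  apply propositional_extensionality. split; intro H.
  - eapply rt_trans; [apply crt_sym; eauto| eauto].
  - eapply rt_trans; eauto.
Qed.

Definition col (v : list bool) : nat :=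
  epsilon (inhabits 0%nat) (fun i => (i <= k)%nat /\ A i v /\ forall j, (j < N)%nat -> A i (flip j v)).

Lemma col_spec v : length v = N -> (col v <= k)%nat /\ A (col v) v /\ forall j, (j < N)%nat -> A (col v) (flip j v).
Proof. intro Hv. unfold col. apply epsilon_spec. apply leb; auto. Qed.

Definition acnt (i : nat) (v : list bool) (j : nat) : R :=
  if Nat.eqb (col v) i then (if Bool.eqb (nth j v false) (nth j (cen i v) false) then 1 else 0) else 0.

Lemma Dr_nonneg : 0 <= Dr.
Proof.
  destruct (leb (repeat false N)) as [i [Hi [HA _]]]. apply repeat_length.
  rewrite <- (ham_refl N (repeat false N)). apply (diam i); auto. apply repeat_length. apply rt_refl.
Qed.

Lemma acnt_flip_A i u j : length u = N -> (j < N)%nat -> A i u ->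
  acnt i (flip j u) j <= (if Bool.eqb (nth j u false) (nth j (cen i u) false) then 0 else 1).
Proof.
  intros Hu Hj HA. unfold acnt. destruct (Nat.eqb_spec (col (flip j u)) i) as [E|E].
  2: destruct Bool.eqb; lra.
  assert (Hf : length (flip j u) = N) by (rewrite flip_len; auto).
  destruct (col_spec _ Hf) as [_ [HA1 _]]. rewrite E in HA1.
  assert (Edge i (flip j u) u) as He.
  { repeat split; auto. exists j. split; auto. now rewrite flip_flip. }
  rewrite (cen_inv i _ _ (rt_step _ _ _ _ He)).
  rewrite nth_flip_same by lia.
  destruct (nth j u false), (nth j (cen i u) false); simpl; lra.
Qed.

Lemma acnt_flip_nA i u j : length u = N -> (j < N)%nat -> ~ A i u -> acnt i (flip j u) j = 0.
Proof.
  intros Hu Hj HA. unfold acnt. destruct (Nat.eqb_spec (col (flip j u)) i) as [E|E]; auto.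
  assert (Hf : length (flip j u) = N) by (rewrite flip_len; auto).
  destruct (col_spec _ Hf) as [_ [_ HA2]]. specialize (HA2 j Hj). rewrite flip_flip, E in HA2. tauto.
Qed.

Lemma acnt_row i u : (i <= k)%nat -> length u = N -> sumR (seq 0 N) (fun j => acnt i (flip j u) j) <= Dr.
Proof.
  intros Hi Hu. destruct (classic (A i u)) as [HA|HA].
  - apply Rle_trans with (ham N u (cen i u)).
    + apply sumR_le. intros j Hj. apply in_seq in Hj. apply acnt_flip_A; auto. lia.
    + apply (diam i); auto. apply cen_spec.
  - rewrite sumR_ext with (G := fun _ => 0). rewrite sumR_const. pose proof Dr_nonneg. lra.
    intros j Hj. apply in_seq in Hj. apply acnt_flip_nA; auto. lia.
Qed.

Theorem cube_bound : INR N <= INR (k + 2) * Dr.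
Proof.
  set (B := allv N).
  assert (Hv : forall v, In v B -> INR N - Dr <= sumR (seq 0 N) (fun j => sumR (seq 0 (k+1)) (fun i => acnt i v j))).
  { intros v Hin. pose proof (allv_len _ _ Hin) as Hl. destruct (col_spec v Hl) as [Hc [HA _]].
    apply Rle_trans with (INR N - ham N v (cen (col v) v)).
    { assert (ham N v (cen (col v) v) <= Dr) by (apply (diam (col v)); auto; apply cen_spec). lra. }
    rewrite ham_compl. apply Req_le. apply sumR_ext. intros j _.
    rewrite sumR_ext with (G := fun i => if Nat.eqb (col v) i then
       (if Bool.eqb (nth j v false) (nth j (cen (col v) v) false) then 1 else 0) else 0).
    - rewrite sumR_ind; auto. lia.
    - intros i _. unfold acnt. destruct (Nat.eqb_spec (col v) i); subst; auto. }
  assert (H1 : sumR B (fun _ => INR N - Dr) <= sumR B (fun v => sumR (seq 0 N) (fun j => sumR (seq 0 (k+1)) (fun i => acnt i v j))))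
    by (apply sumR_le; auto).
  rewrite sumR_swap in H1.
  rewrite sumR_ext with (G := fun j => sumR (seq 0 (k+1)) (fun i => sumR B (fun v => acnt i v j))) in H1
    by (intros; apply sumR_swap).
  rewrite sumR_swap in H1.
  rewrite sumR_ext with (G := fun i => sumR (seq 0 N) (fun j => sumR B (fun u => acnt i (flip j u) j))) in H1.
  2:{ intros i _. apply sumR_ext. intros j Hj. apply in_seq in Hj. unfold B. apply (sumR_flip N j (fun v => acnt i v j)). lia. }
  rewrite sumR_ext with (G := fun i => sumR B (fun u => sumR (seq 0 N) (fun j => acnt i (flip j u) j))) in H1
    by (intros; symmetry; apply sumR_swap).
  assert (H2 : sumR (seq 0 (k+1)) (fun i => sumR B (fun u => sumR (seq 0 N) (fun j => acnt i (flip j u) j)))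
     <= sumR (seq 0 (k+1)) (fun i => sumR B (fun u => Dr))).
  { apply sumR_le. intros i Hi. apply in_seq in Hi. apply sumR_le. intros u Hu.
    apply acnt_row. lia. apply allv_len; auto. }
  rewrite sumR_const in H1. rewrite (sumR_const B Dr), sumR_const, length_seq in H2.
  assert (Hpos : 0 < INR (length B)).
  { unfold B. rewrite allv_length. apply lt_0_INR. pose proof (Nat.pow_nonzero 2 N). lia. }
  rewrite plus_INR in *. simpl in *. 
  assert (INR (length B) * (INR N - Dr) <= INR (length B) * ((INR k + 1) * Dr)) by nra.
  apply Rmult_le_reg_l in H; auto. lra.
Qed.

End Cube.


Lemma exp_mono x y : x <= y -> exp x <= exp y.
Proof. intro H. destruct (Rle_lt_or_eq_dec _ _ H). left; now apply exp_increasing. subst; lra. Qed.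

Section Balls.
Variables (G : group) (Sg : list G).
Notation wleG := (word_le (@gmul G) (@gone G) (genG G Sg)).
Notation lenG := (word_len (@gmul G) (@gone G) (genG G Sg)).
Hypothesis gens : generates G Sg.

Fixpoint Bl (n : nat) : list G :=
  match n with 0%nat => gone :: nil
  | S n' => Bl n' ++ flat_map (fun s => map (gmul s) (Bl n')) (Sg ++ map ginv Sg) end.

Lemma Bl_word (l : list G) n : Forall (genG G Sg) l -> (length l <= n)%nat -> In (fold_right gmul gone l) (Bl n).
Proof.
  revert l. induction n as [|n IH]; intros l Hl Hn.
  - destruct l; simpl in *; [auto|lia].
  - destruct l as [|a l]; simpl.
    + apply in_or_app. left. apply (IH nil); simpl; auto. lia.
    + apply in_or_app. right. inversion Hl; subst. apply in_flat_map. exists a. split.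
      * destruct H1 as [H1|H1]. apply in_or_app; auto. apply in_or_app; right.
        rewrite <- (g_invK G a). apply in_map; auto.
      * apply in_map. apply IH; auto. simpl in Hn; lia.
Qed.

Lemma ball_exists rho : exists l : list G, NoDup l /\ forall x, In x l <-> INR (lenG x) < rho.
Proof.
  destruct (INR_archimed 1 rho) as [M HM]. lra.
  exists (nodup (gdec G) (filter (fun x => dec (INR (lenG x) < rho)) (Bl M))).
  split. apply NoDup_nodup. intro x. rewrite nodup_In, filter_In, decP. split; [tauto|].
  intro Hx. split; auto. destruct (gens x) as [n0 Hn0].
  destruct (wlen_le' G _ _ _ Hn0) as [l [H1 [H2 H3]]]. rewrite <- H3. apply Bl_word; auto.
  assert (lenG x < M)%nat. { apply INR_lt. lra. } lia.
Qed.

Lemma growth_spec rho : exists l : list G, NoDup l /\ length l = growth G Sg rho /\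
   forall x, In x l <-> INR (lenG x) < rho.
Proof.
  unfold growth. apply (epsilon_spec (inhabits 0%nat) (fun m => exists l : list G, NoDup l /\ length l = m /\
       forall x : G, In x l <-> INR (lenG x) < rho)).
  destruct (ball_exists rho) as [l [H1 H2]]. exists (length l), l. auto.
Qed.
End Balls.

Section Emb.
Variables (G H : group) (h : H).
Fixpoint emb_f (P : list G) (v : list bool) (z : G) : H :=
  match P, v with
  | p :: P', b :: v' => if dec (z = p) then (if b then h else gone) else emb_f P' v' z
  | _, _ => gone end.

Lemma emb_supp P v z : emb_f P v z <> gone -> In z P.
Proof.
  revert v; induction P as [|p P IH]; destruct v as [|b v]; simpl; try tauto.
  unfold dec; destruct excluded_middle_informative; auto. intro Hz. right. eapply IH; eauto.
Qed.

Lemma emb_flip P v j z : z <> nth j P gone -> emb_f P (flip j v) z = emb_f P v z.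
Proof.
  revert v j; induction P as [|p P IH]; destruct v as [|b v], j as [|j]; simpl; intros Hz; auto.
  - rewrite decF; auto.
  - destruct dec; auto.
Qed.

Lemma emb_nth P v j : NoDup P -> (j < length P)%nat -> length v = length P ->
  emb_f P v (nth j P gone) = if nth j v false then h else gone.
Proof.
  revert v j; induction P as [|p P IH]; destruct v as [|b v], j as [|j]; simpl; intros HN Hj Hv; try lia.
  - rewrite decT; auto.
  - inversion HN; subst. rewrite decF. apply IH; auto; lia.
    intro E. apply H2. rewrite <- E. apply nth_In. lia.
Qed.
End Emb.

Lemma INR_filter {A} (l : list A) (p : A -> bool) :
  INR (length (filter p l)) = sumR l (fun a => if p a then 1 else 0).
Proof.
  induction l as [|a l IH]; [simpl; lra|]. unfold sumR in *. cbn [filter fold_right].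
  destruct (p a); cbn [length]; rewrite ?S_INR, IH; lra.
Qed.


Section LB.
Variables (G H : group) (S : list G).
Notation wleG := (word_le (@gmul G) (@gone G) (genG G S)).
Notation lenG := (word_len (@gmul G) (@gone G) (genG G S)).
Notation wleW := (word_le (wr_mul G H) (wr_one G H) (wr_gen G H S)).
Notation lenW := (word_len (wr_mul G H) (wr_one G H) (wr_gen G H S)).
Hypothesis gens : generates G S.

Lemma inv_mul_cfg (f f' : G -> H) :
  wr_mul G H (wr_inv G H (f, gone)) (f', gone) = (fun q => gmul (ginv (f q)) (f' q), gone).
Proof. apply wr_eq; simpl. intro q. rewrite gmul1l, g_invK, gmul1l. auto. rewrite g_inv1; apply gmul1l. Qed.

Lemma ginv_mul_eq1 (K : group) (a b : K) : gmul (ginv a) b = gone -> b = a.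
Proof. intro E. rewrite <- (g_mulKr K a b), E, gmul1r. auto. Qed.

Lemma lenG_one : lenG gone = 0%nat.
Proof. apply (wlen_one G). Qed.

Variable h : H.
Hypothesis hne : h <> gone.

Lemma adj_wle P v j : (j < length P)%nat ->
  wleW (wr_mul G H (wr_inv G H (emb_f G H h P v, gone)) (emb_f G H h P (flip j v), gone))
       (2 * lenG (nth j P gone) + 1).
Proof.
  intro Hj. rewrite inv_mul_cfg.
  replace (2 * lenG (nth j P gone) + 1)%nat with (lamp_cost G S (nth j P gone :: nil) + lenG gone)%nat
    by (simpl; rewrite lenG_one; lia).
  apply wle_config; auto. intros z Hz. simpl. left.
  destruct (classic (nth j P gone = z)) as [|Hn]; auto. exfalso. apply Hz.
  rewrite emb_flip by auto. apply gmulVl.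
Qed.

Lemma ham_le P u z : NoDup P -> length u = length P -> length z = length P ->
  ham (length P) u z <= INR (lenW (wr_mul G H (wr_inv G H (emb_f G H h P u, gone)) (emb_f G H h P z, gone))).
Proof.
  intros HP Hu Hz. rewrite inv_mul_cfg.
  set (e := (fun q => gmul (ginv (emb_f G H h P u q)) (emb_f G H h P z q), @gone G) : wr G H).
  assert (We : wleW e (lenW e)).
  { apply (wlen_le' (Wg G H)) with (lamp_cost G S P + lenG gone)%nat. apply wle_config; auto.
    intros q Hq. destruct (classic (emb_f G H h P u q = gone)) as [E1|E1].
    - destruct (classic (emb_f G H h P z q = gone)) as [E2|E2].
      + elim Hq. rewrite E1, E2, g_inv1. apply gmul1l.
      + eapply emb_supp; eauto.
    - eapply emb_supp; eauto. }
  set (J := filter (fun j => negb (Bool.eqb (nth j u false) (nth j z false))) (seq 0 (length P))).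
  assert (HJ : forall j, In j J -> (j < length P)%nat /\ nth j u false <> nth j z false).
  { intros j Hj. unfold J in Hj. apply filter_In in Hj. destruct Hj as [H1 H2]. apply in_seq in H1.
    split. lia. intro E. rewrite E, eqb_reflx in H2. discriminate. }
  assert (ham (length P) u z = INR (length (map (fun j => nth j P gone) J))).
  { rewrite length_map. unfold J. rewrite INR_filter. unfold ham. apply sumR_ext. intros. destruct Bool.eqb; simpl; auto. }
  rewrite H0. apply le_INR. apply (wle_count G H S e); auto.
  - apply FinFun.Injective_map_NoDup_in.
    + intros a b Ha Hb E. apply HJ in Ha. apply HJ in Hb. apply (proj1 (NoDup_nth P gone) HP); tauto.
    + unfold J. apply NoDup_filter, seq_NoDup.
  - intros q Hq. apply in_map_iff in Hq. destruct Hq as [j [<- Hj]]. apply HJ in Hj. destruct Hj as [Hj Hne].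
    unfold e; simpl. rewrite !emb_nth; auto. intro E. apply ginv_mul_eq1 in E.
    destruct (nth j u false), (nth j z false); auto.
Qed.

End LB.


Lemma Rpower2_mono a b : a <= b -> Rpower 2 a <= Rpower 2 b.
Proof. intro H. unfold Rpower. apply exp_mono. pose proof ln_lt_2. nra. Qed.

Lemma pinfty_le (x c : R) (y : Rbar) : 0 < x -> Rbar_le y (Rbar_plus (Rbar_mult x p_infty) c).
Proof.
  intro Hx. simpl. destruct (Rle_dec 0 x) as [r0|r0]; [destruct (Rle_lt_or_eq_dec 0 x r0)|]; simpl; try lra.
  destruct y; simpl; auto.
Qed.

Lemma crt_map {A B} (R1 : A -> A -> Prop) (R2 : B -> B -> Prop) (f : A -> B) :
  (forall a b, R1 a b -> R2 (f a) (f b)) -> forall a b, clos_refl_trans _ R1 a b -> clos_refl_trans _ R2 (f a) (f b).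
Proof. intros HR a b Hc. induction Hc. apply rt_step; auto. apply rt_refl. eapply rt_trans; eauto. Qed.

Section LBmain.
Variables (G H : group) (S : list G) (k : nat).
Notation lenG := (word_len (@gmul G) (@gone G) (genG G S)).
Notation lenW := (word_len (wr_mul G H) (wr_one G H) (wr_gen G H S)).

Lemma crt_len N A i u z : clos_refl_trans _ (Edge N A i) u z -> length u = N -> length z = N.
Proof. induction 1; auto. intros _. destruct H0 as [H1 [_ [_ [j [_ ->]]]]]. rewrite flip_len; auto. Qed.

Theorem lower_bound (D : R -> Rbar) : generates G S -> exp_growth G S -> (exists h : H, h <> gone) ->
  control_function (wr_fs G H) (wr_dist G H S) k D -> weakly_dominates D exp2.
Proof.
  intros gens Hexp [h hne] [Hnn Hcf].
  destruct Hexp as [[lam [C [Hl [HC Hlow]]]] _].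
  assert (Hk2 : 2 <= INR (k + 2)) by (rewrite plus_INR; simpl; pose proof (pos_INR k); lra).
  exists (2 * lam * INR (k + 2)), (2 * C + 1). split; [nra|split; [lra|]].
  intros t Ht.
  set (rho := lam * INR (k + 2) * t + C).
  set (s := INR (k + 2) * t).
  assert (Hs : 0 <= s) by (unfold s; apply Rmult_le_pos; lra).
  specialize (Hlow s Hs). simpl in Hlow. replace (lam * s + C) with rho in Hlow by (unfold rho, s; ring).
  set (r := 2 * lam * INR (k + 2) * t + (2 * C + 1)).
  assert (Hr : r = 2 * rho + 1) by (unfold r, rho; ring).
  assert (Hrho : 0 <= rho) by (unfold rho; assert (0 <= lam * INR (k+2) * t) by (apply Rmult_le_pos; [apply Rmult_le_pos|]; lra); lra).
  destruct (Hcf r ltac:(lra)) as [Xs [Hcov [Hleb Hdiam]]].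
  destruct (growth_spec G S gens rho) as [P [HP [HlenP HinP]]].
  assert (Hpw : Rpower 2 t <= Rpower 2 s) by (apply Rpower2_mono; unfold s; nra).
  set (emb := fun v => (emb_f G H h P v, @gone G) : wr G H).
  assert (Hdom : forall v, wr_fs G H (emb v)).
  { intro v. exists P. intros y Hy. unfold emb in Hy; simpl in Hy. eapply emb_supp; eauto. }
  assert (Hadj : forall v j, (j < length P)%nat -> wr_dist G H S (emb v) (emb (flip j v)) < r).
  { intros v j Hj. unfold wr_dist, word_dist, emb.
    pose proof (wlen_le (Wg G H) _ _ _ (adj_wle G H S gens h P v j Hj)) as Hle.
    apply le_INR in Hle. rewrite plus_INR, mult_INR in Hle. simpl in Hle.
    assert (INR (lenG (nth j P gone)) < rho) by (apply HinP, nth_In; auto). lra. }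
  destruct (D r) as [Dr| |] eqn:EDr.
  - assert (Hcube : INR (length P) <= INR (k + 2) * Dr).
    { apply (cube_bound (length P) k (fun i v => Xs i (emb v)) Dr).
      - intros v Hv. destruct (Hleb (emb v) (Hdom v)) as [i [Hi Hball]].
        exists i. split; auto. split.
        + apply Hball; auto. unfold wr_dist, word_dist. rewrite wr_mulVl.
          rewrite (wlen_one (Wg G H)). simpl. lra.
        + intros j Hj. apply Hball; auto.
      - intros i u z Hi Hu HA Hc.
        assert (Hz : length z = length P) by (eapply crt_len; eauto).
        apply Rle_trans with (wr_dist G H S (emb u) (emb z)).
        + apply ham_le; auto.
        + assert (r_conn (wr_fs G H) (wr_dist G H S) (Xs i) r (emb u) (emb z)).
          { refine (crt_map _ _ emb _ _ _ Hc). intros a b Hab.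
            destruct Hab as [H1 [H2 [H3 [j [Hj ->]]]]].
            repeat split; auto. }
          pose proof (Hdiam i Hi (emb u) (emb z) (Hdom u) HA H0) as Hd. exact Hd. }
    simpl. rewrite HlenP in Hcube.
    assert (HD0 : 0 <= Dr) by (specialize (Hnn r ltac:(lra)); rewrite EDr in Hnn; exact Hnn).
    assert (lam * INR (growth G S rho) <= lam * (INR (k + 2) * Dr)) by (apply Rmult_le_compat_l; lra).
    assert (0 <= lam * (INR (k + 2) * Dr)) by (apply Rmult_le_pos; [lra|apply Rmult_le_pos; lra]).
    lra.
  - apply pinfty_le. nra.
  - specialize (Hnn r ltac:(lra)). rewrite EDr in Hnn. destruct Hnn.
Qed.
End LBmain.


Section UB.
Variables (G H : group) (S : list G).
Notation wleG := (word_le (@gmul G) (@gone G) (genG G S)).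
Notation lenG := (word_len (@gmul G) (@gone G) (genG G S)).
Notation wleW := (word_le (wr_mul G H) (wr_one G H) (wr_gen G H S)).
Notation lenW := (word_len (wr_mul G H) (wr_one G H) (wr_gen G H S)).
Hypothesis gens : generates G S.

Lemma lamp_cost_bound (L : list G) R : (forall q, In q L -> INR (lenG q) < R) ->
  INR (lamp_cost G S L) <= INR (length L) * (2 * R + 1).
Proof.
  induction L as [|q L IH]; intro HL. simpl; lra.
  cbn [lamp_cost length]. rewrite !plus_INR, mult_INR, S_INR. replace (INR 2) with 2 by (simpl; lra). replace (INR 1) with 1 by (simpl; lra).
  assert (INR (lenG q) < R) by (apply HL; simpl; auto).
  assert (INR (lamp_cost G S L) <= INR (length L) * (2 * R + 1)) by (apply IH; intros; apply HL; simpl; auto).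
  rewrite S_INR. nra.
Qed.

Lemma distG_tri a b c : distG G S a c <= distG G S a b + distG G S b c.
Proof.
  unfold distG, word_dist. rewrite <- plus_INR. apply le_INR.
  apply (wlen_le G). replace (gmul (ginv a) c) with (gmul (gmul (ginv a) b) (gmul (ginv b) c)).
  apply (wle_mul G); apply wleG_len; auto.
  rewrite <- gmulA, g_mulKr. auto.
Qed.

Lemma W_exists x y : wr_fs G H x -> wr_fs G H y -> wleW (wr_mul G H (wr_inv G H x) y) (lenW (wr_mul G H (wr_inv G H x) y)).
Proof.
  intros [Lx Hx] [Ly Hy]. apply (wlen_le' (Wg G H)) with (lamp_cost G S (map (gmul (ginv (snd x))) (Lx ++ Ly)) + lenG (snd (wr_mul G H (wr_inv G H x) y)))%nat.
  destruct (wr_mul G H (wr_inv G H x) y) as [phi g] eqn:E.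
  apply wle_config; auto. intros q Hq.
  assert (Hphi : phi q = gmul (ginv (fst x (gmul (snd x) q))) (fst y (gmul (snd x) q))).
  { replace phi with (fst (wr_mul G H (wr_inv G H x) y)) by (rewrite E; auto). simpl. rewrite g_invK. auto. }
  rewrite Hphi in Hq. replace q with (gmul (ginv (snd x)) (gmul (snd x) q)) by apply g_mulKl.
  apply in_map. apply in_or_app.
  destruct (classic (fst x (gmul (snd x) q) = gone)) as [E1|E1].
  - right. apply Hy. intro E2. apply Hq. rewrite E1, E2, g_inv1. apply gmul1l.
  - left. apply Hx. auto.
Qed.

Lemma proj_le x y : wr_fs G H x -> wr_fs G H y -> distG G S (snd x) (snd y) <= wr_dist G H S x y.
Proof.
  intros Hx Hy. unfold distG, wr_dist, word_dist. apply le_INR. apply (wlen_le G).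
  pose proof (wle_snd G H S _ _ (W_exists x y Hx Hy)). simpl in H0. exact H0.
Qed.

Lemma step_lamp a b p : wr_fs G H a -> wr_fs G H b -> fst b p <> fst a p ->
  distG G S (snd a) p < wr_dist G H S a b.
Proof.
  intros Ha Hb Hp. unfold distG, wr_dist, word_dist. apply lt_INR.
  destruct (wle_supp G H S _ _ (W_exists a b Ha Hb) (gmul (ginv (snd a)) p)) as [m [Hm Wm]].
  - simpl. rewrite g_invK, g_mulKr. intro E. apply ginv_mul_eq1 in E. auto.
  - pose proof (wlen_le G _ _ _ Wm). lia.
Qed.

End UB.


Section UBmain.
Variables (G H : group) (S : list G).
Notation wleG := (word_le (@gmul G) (@gone G) (genG G S)).
Notation lenG := (word_len (@gmul G) (@gone G) (genG G S)).
Notation wleW := (word_le (wr_mul G H) (wr_one G H) (wr_gen G H S)).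
Notation lenW := (word_len (wr_mul G H) (wr_one G H) (wr_gen G H S)).
Hypothesis gens : generates G S.

Lemma chain_claim (U : G -> Prop) (X : wr G H -> Prop) r x z :
  (forall a, X a -> U (snd a)) -> wr_fs G H x ->
  r_conn (wr_fs G H) (wr_dist G H S) X r x z ->
  r_conn (fun _ => True) (distG G S) U r (snd x) (snd z) /\
  (forall p, fst z p <> fst x p -> exists g', r_conn (fun _ => True) (distG G S) U r (snd x) g' /\ distG G S g' p < r).
Proof.
  intros HXU Hx Hc. apply clos_rt_rtn1 in Hc. induction Hc as [|y0 z Hst Hc IH].
  - split. apply rt_refl. intros p Hp. tauto.
  - destruct IH as [IH1 IH2]. destruct Hst as [D0 [X0 [D1 [X1 Hd]]]]. split.
    + eapply rt_trans; [exact IH1|]. apply rt_step. repeat split; auto.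
      eapply Rle_lt_trans; [apply proj_le|]; eauto.
    + intros p Hp. destruct (classic (fst y0 p = fst x p)) as [E|E].
      * exists (snd y0). split; auto. eapply Rlt_trans; [apply step_lamp|]; eauto. congruence.
      * apply IH2; auto.
Qed.

End UBmain.


Lemma Rpower2_plus a b : Rpower 2 (a + b) = Rpower 2 a * Rpower 2 b.
Proof. unfold Rpower. rewrite Rmult_plus_distr_r, exp_plus. auto. Qed.
Lemma Rpower2_ge1 x : 0 <= x -> 1 <= Rpower 2 x.
Proof. intro Hx. replace 1 with (Rpower 2 0). apply Rpower2_mono; auto. unfold Rpower. rewrite Rmult_0_l. apply exp_0. Qed.
Lemma lin_le_pow x : 0 <= x -> 1 + x <= Rpower 2 (2 * x).
Proof.
  intro Hx. apply Rle_trans with (exp x). apply exp_ineq1_le. unfold Rpower. apply exp_mono.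
  pose proof ln_lt_2. nra.
Qed.

Lemma dom_growth (g : R -> R) (l1 C1 a : R) : 1 <= l1 -> 0 <= C1 -> 0 < a ->
  (forall s, 0 <= s -> g s <= l1 * Rpower 2 (l1 * s + C1) + C1) ->
  weakly_dominates exp2 (fun t => Finite (g (a * t) * (2 * (a * t) + 1) + a * t)).
Proof.
  intros Hl HC Ha Hg.
  set (b := l1 * a + 4 * a). set (M := l1 + C1 + 1).
  exists (b + M), C1. split; [unfold b, M; nra|split; [lra|]].
  intros t Ht. simpl.
  set (E := Rpower 2 (l1 * (a * t) + C1)). set (F := Rpower 2 (2 * (2 * (a * t)))).
  assert (Hat : 0 <= a * t) by nra.
  assert (HE : 1 <= E) by (apply Rpower2_ge1; nra).
  assert (HF1 : 1 + 2 * (a * t) <= F) by (apply lin_le_pow; lra).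
  assert (Hg1 : g (a * t) <= l1 * E + C1) by (apply Hg; auto).
  assert (Hg2 : g (a * t) * (2 * (a * t) + 1) <= (l1 * E + C1) * F).
  { destruct (Rle_lt_dec 0 (g (a * t))).
    - apply Rmult_le_compat; lra.
    - assert (0 <= (l1 * E + C1) * F) by (apply Rmult_le_pos; nra). nra. }
  assert (Hs : (l1 * E + C1) * F + a * t <= M * (E * F)).
  { assert (0 <= F * (E - 1)) by (apply Rmult_le_pos; lra).
    assert (0 <= C1 * (F * (E - 1))) by (apply Rmult_le_pos; lra).
    unfold M. nra. }
  assert (HEF : E * F = Rpower 2 (b * t + C1)).
  { unfold E, F. rewrite <- Rpower2_plus. f_equal. unfold b. ring. }
  assert (Hfin : M * Rpower 2 (b * t + C1) <= (b + M) * Rpower 2 ((b + M) * t + C1)).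
  { assert (1 <= Rpower 2 (b * t + C1)) by (apply Rpower2_ge1; unfold b; nra).
    assert (Rpower 2 (b * t + C1) <= Rpower 2 ((b + M) * t + C1)) by (apply Rpower2_mono; unfold M; nra).
    assert (0 <= b) by (unfold b; nra). assert (0 <= M) by (unfold M; lra).
    assert (M * Rpower 2 (b * t + C1) <= M * Rpower 2 ((b + M) * t + C1)) by (apply Rmult_le_compat_l; lra).
    assert (0 <= b * Rpower 2 ((b + M) * t + C1)) by (apply Rmult_le_pos; lra). nra. }
  rewrite HEF in Hs. lra.
Qed.


Section UBfinal.
Variables (G H : group) (S : list G).
Notation wleG := (word_le (@gmul G) (@gone G) (genG G S)).
Notation lenG := (word_len (@gmul G) (@gone G) (genG G S)).
Notation wleW := (word_le (wr_mul G H) (wr_one G H) (wr_gen G H S)).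
Notation lenW := (word_len (wr_mul G H) (wr_one G H) (wr_gen G H S)).

Theorem upper_bound (n k : nat) : generates G S -> exp_growth G S ->
  dimAN_le (fun _ : G => True) (distG G S) n -> (n <= k)%nat ->
  exists D : R -> Rbar, control_function (wr_fs G H) (wr_dist G H S) k D /\ weakly_dominates exp2 D.
Proof.
  intros gens Hexp [m [Hmn [Cg [HCg [_ HcfG]]]]] Hnk.
  destruct Hexp as [_ [l1 [C1 [Hl1 [HC1 Hup]]]]].
  set (a := Cg + 1).
  exists (fun t => Finite (INR (growth G S (a * t)) * (2 * (a * t) + 1) + a * t)).
  split.
  2:{ apply (dom_growth (fun s => INR (growth G S s)) l1 C1 a); [auto|auto|unfold a; lra|].
      intros s Hs. specialize (Hup s Hs). simpl in Hup. exact Hup. }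
  split.
  { intros t Ht. simpl. pose proof (pos_INR (growth G S (a * t))).
    assert (0 <= a * t) by (unfold a; nra). nra. }
  intros r Hr. destruct (HcfG r Hr) as [U [Ucov [Uleb Udiam]]].
  exists (fun i x => (i <= m)%nat /\ U i (snd x)).
  split; [|split].
  - intros x Hx. destruct (Ucov (snd x) I) as [i [Hi HU]]. exists i. split; [lia|auto].
  - intros x Hx. destruct (Uleb (snd x) I) as [i [Hi Hb]]. exists i. split; [lia|].
    intros y Hy Hd. split; auto. apply Hb; auto. eapply Rle_lt_trans; [apply proj_le|]; eauto.
  - intros i Hi x y Hx [Him HUx] Hc.
    destruct (chain_claim G H S gens (U i) (fun x => (i <= m)%nat /\ U i (snd x)) r x y) as [Hg Hl]; auto.
    { intros b [_ Hb]; auto. }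
    assert (Hdg : forall g', r_conn (fun _ => True) (distG G S) (U i) r (snd x) g' -> distG G S (snd x) g' <= Cg * r).
    { intros g' Hg'. exact (Udiam i Him (snd x) g' I HUx Hg'). }
    set (R := a * r).
    destruct (growth_spec G S gens R) as [B [HB [HlenB HinB]]].
    simpl. unfold wr_dist, word_dist.
    destruct (wr_mul G H (wr_inv G H x) y) as [phi g] eqn:E.
    assert (Hphi : forall q, phi q = gmul (ginv (fst x (gmul (snd x) q))) (fst y (gmul (snd x) q))).
    { intro q. replace phi with (fst (wr_mul G H (wr_inv G H x) y)) by (rewrite E; auto). simpl. rewrite g_invK. auto. }
    assert (Hgg : g = gmul (ginv (snd x)) (snd y)).
    { replace g with (snd (wr_mul G H (wr_inv G H x) y)) by (rewrite E; auto). auto. }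
    assert (Hsupp : forall q, phi q <> gone -> In q B).
    { intros q Hq. apply HinB. rewrite Hphi in Hq.
      assert (Hp : fst y (gmul (snd x) q) <> fst x (gmul (snd x) q)).
      { intro E2. apply Hq. rewrite E2. apply gmulVl. }
      destruct (Hl _ Hp) as [g' [Hg'1 Hg'2]].
      pose proof (Hdg g' Hg'1) as T1.
      pose proof (distG_tri G S gens (snd x) g' (gmul (snd x) q)) as T2.
      change (distG G S (snd x) (gmul (snd x) q)) with (INR (lenG (gmul (ginv (snd x)) (gmul (snd x) q)))) in T2. rewrite g_mulKl in T2. unfold R, a. lra. }
    pose proof (wlen_le (Wg G H) _ _ _ (wle_config G H S gens B phi g Hsupp)) as Hle.
    apply le_INR in Hle. rewrite plus_INR in Hle.
    pose proof (lamp_cost_bound G S B R (fun q Hq => proj1 (HinB q) Hq)) as Hlc.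
    assert (Hgl : INR (lenG g) <= Cg * r).
    { rewrite Hgg. exact (Hdg (snd y) Hg). }
    rewrite HlenB in Hlc. unfold R in *. unfold a in *. simpl in Hle. nra.
Qed.
End UBfinal.

Theorem corollary4p6 (G : group) (S : list G) (H : group) (n k : nat) :
  generates G S ->
  exp_growth G S ->
  finite_group H ->
  (exists h : H, h <> gone) ->
  dimAN_le (fun _ : G => True) (distG G S) n ->
  (n <= k)%nat ->
  (exists D : R -> Rbar,
      control_function (wr_fs G H) (wr_dist G H S) k D /\ weakly_dominates exp2 D) /\
  (forall D : R -> Rbar,
      control_function (wr_fs G H) (wr_dist G H S) k D -> weakly_dominates D exp2).
Proof.
  intros gens Hexp _ Hh Hdim Hnk. split.
  - eapply upper_bound; eauto.
  - intros D HD. eapply lower_bound; eauto.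
Qed.
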